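(* Let $m\geq 1$ be an integer, $\omega\in[-1,1]$, and $$W_{m,\omega}(x)=m-1-\frac{m}{1-x}+\frac{1-\omega x}{(1-x)^{m+1}(1-2\omega x+x^2)}\qquad(0\le x<1).$$ Then for all real $x,y\geq 0$ with $x+y<1$, $$W_{m,\omega}(x)+W_{m,\omega}(y)\leq W_{m,\omega}(x+y).$$ *)

(* Defs.v *)
From Stdlib Require Import Reals.
Open Scope R_scope.

Definition W (m : nat) (omega x : R) : R :=
  INR m - 1 - INR m / (1 - x)
  + (1 - omega * x) / ((1 - x) ^ (m + 1) * (1 - 2 * omega * x + x ^ 2)).

(* Main.v *)
Require Import Defs.
From Stdlib Require Import Reals Lra Psatz.
From Coquelicot Require Import Coquelicot.
Open Scope R_scope.
Definition Dq w x := 1 - 2*w*x + x^2.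
Definition Nq w x := 1 + w - (1+2*w)*x + x^2.
Definition q w x := Nq w x / ((1-x)^2 * Dq w x).
Definition qd w x := (2*(Dq w x)^2 + Dq w x*(2*w-1-x) + 2*(1-x)*(w-x)^2)/((1-x)^3 * (Dq w x)^2).

Lemma Dq_pos w x : -1 <= w <= 1 -> 0 <= x < 1 -> 0 < Dq w x.
Proof. intros. unfold Dq. nra. Qed.

Lemma Nq_nonneg w x : -1 <= w <= 1 -> 0 <= x < 1 -> 0 <= Nq w x.
Proof. intros. unfold Nq.
destruct (Rle_lt_dec x (1/2)); nra. Qed.

Lemma M_nonneg w x : -1 <= w <= 1 -> 0 <= x < 1 ->
  0 <= 2*(Dq w x)^2 + Dq w x*(2*w-1-x) + 2*(1-x)*(w-x)^2.
Proof. intros Hw Hx. unfold Dq.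
replace (2 * (1 - 2 * w * x + x ^ 2) ^ 2 + (1 - 2 * w * x + x ^ 2) * (2 * w - 1 - x) +
 2 * (1 - x) * (w - x) ^ 2) with
 ((1-w)^2*(8*(1-x)^2-10*(1-x)+4) + (1-w)*(2*(1-x) - 8*(1-x)^3) + (2*(1-x)^4+3*(1-x)^3)) by ring.
set (s := 1 - x). set (a := 1 - w).
assert (0 < s <= 1) by (unfold s; lra).
assert (0 <= a <= 2) by (unfold a; lra).
assert (HA: 0 < 8*s^2-10*s+4) by (pose proof (pow2_ge_0 (s - 5/8)); nra).
destruct (Rle_lt_dec s (1/2)).
- assert (0 <= 2*s - 8*s^3) by nra. assert (0 <= a^2*(8*s^2-10*s+4)) by nra.
  assert (0 <= a*(2*s - 8*s^3)) by nra.
  assert (0<=s^3) by (apply pow_le; lra). assert (0<=s^4) by (apply pow_le; lra).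
  lra.
- assert (HE: 1 - 12*s + 14*s^2 - 4*s^3 < 0) by nra.
  set (A := 8*s^2-10*s+4) in *. set (B := 2*s - 8*s^3). set (C := 2*s^4+3*s^3).
  assert (HBC: B^2 - 4*A*C = 4*s^2*(1 - 12*s + 14*s^2 - 4*s^3)) by (unfold A,B,C; ring).
  assert (HQ: 4*A*(a^2*A + a*B + C) = (2*A*a+B)^2 - (B^2 - 4*A*C)) by ring.
  assert (0 <= 4*A*(a^2*A + a*B + C)).
  { rewrite HQ, HBC. pose proof (pow2_ge_0 (2*A*a+B)). assert (0 < s^2) by (apply pow_lt; lra).
    assert (0 <= - (4*s^2*(1 - 12*s + 14*s^2 - 4*s^3))) by nra. lra. }
  assert (0 <= a^2*A + a*B + C).
  { apply (Rmult_le_reg_l (4*A)); lra. }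
  unfold A, B, C in *. lra.
Qed.

Lemma q_deriv w x : -1 <= w <= 1 -> 0 <= x < 1 -> is_derive (q w) x (qd w x).
Proof. intros Hw Hx. pose proof (Dq_pos w x Hw Hx).
unfold q, qd, Nq. unfold Dq in *. auto_derive.
- assert (1 - x <> 0) by lra. assert (1 + - x <> 0) by lra.
  assert (1 + - (2 * w * x) + x * (x * 1) <> 0) by lra.
  repeat apply Rmult_integral_contrapositive_currified; lra.
- field. split; lra.
Qed.

Lemma qd_nonneg w x : -1 <= w <= 1 -> 0 <= x < 1 -> 0 <= qd w x.
Proof. intros. unfold qd. pose proof (M_nonneg w x H H0). pose proof (Dq_pos w x H H0).
apply Rdiv_le_0_compat; [lra|]. apply Rmult_lt_0_compat; [apply pow_lt; lra| apply pow_lt; lra]. Qed.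

Lemma q_mono w x s : -1 <= w <= 1 -> 0 <= x -> x <= s -> s < 1 -> q w x <= q w s.
Proof. intros Hw Hx Hxs Hs. destruct (Req_dec x s) as [->|Hne]; [lra|].
destruct (MVT_cor2 (q w) (qd w) x s) as [c [Hc1 Hc2]]; [lra| |].
- intros c Hc. apply is_derive_Reals. apply q_deriv; lra.
- pose proof (qd_nonneg w c Hw ltac:(lra)). nra.
Qed.



Lemma W1_eq w x : -1 <= w <= 1 -> 0 <= x < 1 -> W 1 w x = x * q w x.
Proof. intros. pose proof (Dq_pos w x H H0). unfold W, q, Nq. unfold Dq in *.
simpl INR. change (1+1)%nat with 2%nat. field. split; lra. Qed.

Lemma W_rec m w x : -1 <= w <= 1 -> 0 <= x < 1 ->
  W (S m) w x = W m w x / (1 - x) + INR m * x^2 / (1-x)^2.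
Proof. intros. pose proof (Dq_pos w x H H0). unfold W. unfold Dq in *.
rewrite S_INR. replace (S m + 1)%nat with (S (m+1)) by lia. rewrite <- tech_pow_Rmult.
assert ((1-x)^(m+1) <> 0) by (apply pow_nonzero; lra).
field. repeat split; lra. Qed.

Lemma W0 m w : W m w 0 = 0.
Proof. unfold W. rewrite Rminus_0_r, pow1. field. Qed.

Lemma Wprop m w : (1 <= m)%nat -> -1 <= w <= 1 ->
  (forall x, 0 <= x < 1 -> 0 <= W m w x) /\
  (forall x s, 0 <= x -> x <= s -> s < 1 -> W m w x * s <= W m w s * x).
Proof. intros Hm Hw. induction Hm as [|m Hm [IH1 IH2]].
- split.
  + intros x Hx. rewrite W1_eq by auto. unfold q.
    pose proof (Nq_nonneg w x Hw Hx). pose proof (Dq_pos w x Hw Hx).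
    apply Rmult_le_pos; [lra|]. apply Rdiv_le_0_compat; [lra|].
    apply Rmult_lt_0_compat; [apply pow_lt; lra|lra].
  + intros x s Hx Hxs Hs. rewrite !W1_eq by lra.
    pose proof (q_mono w x s Hw Hx Hxs Hs). assert (0 <= x*s) by nra.
    replace (x * q w x * s) with ((x*s) * q w x) by ring. replace (s * q w s * x) with ((x*s) * q w s) by ring.
    apply Rmult_le_compat_l; lra.
- split.
  + intros x Hx. rewrite W_rec by auto. pose proof (IH1 x Hx).
    assert (0 <= INR m) by apply pos_INR.
    assert (0 < (1-x)^2) by (apply pow_lt; lra).
    assert (0 <= W m w x / (1-x)) by (apply Rdiv_le_0_compat; lra).
    assert (0 <= INR m * x^2 / (1-x)^2) by (apply Rdiv_le_0_compat; [apply Rmult_le_pos; [lra| apply pow2_ge_0]|lra]).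
    lra.
  + intros x s Hx Hxs Hs. rewrite !W_rec by lra.
    pose proof (IH2 x s Hx Hxs Hs). pose proof (IH1 s ltac:(lra)).
    assert (0 <= INR m) by apply pos_INR.
    assert (E1: W m w x / (1 - x) * s <= W m w s * x / (1 - s)).
    { unfold Rdiv. rewrite Rmult_assoc, (Rmult_comm (/ (1-x))), <- Rmult_assoc.
      apply Rle_trans with (W m w s * x * / (1 - x)).
      - apply Rmult_le_compat_r; [apply Rlt_le, Rinv_0_lt_compat; lra| lra].
      - apply Rmult_le_compat_l; [nra|]. apply Rinv_le_contravar; lra. }
    assert (E2: INR m * x ^ 2 / (1 - x) ^ 2 * s <= INR m * s ^ 2 / (1 - s) ^ 2 * x).
    { assert (0 < (1-x)^2) by (apply pow_lt; lra). assert (0 < (1-s)^2) by (apply pow_lt; lra).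
      assert (x * (1-s)^2 <= s * (1-x)^2) by (apply Rmult_le_compat; [lra|apply pow2_ge_0|lra|apply pow_incr; lra]).
      replace (INR m * x ^ 2 / (1 - x) ^ 2 * s) with (INR m * x * s * (x / (1-x)^2)) by (field; lra).
      replace (INR m * s ^ 2 / (1 - s) ^ 2 * x) with (INR m * x * s * (s / (1-s)^2)) by (field; lra).
      apply Rmult_le_compat_l; [apply Rmult_le_pos; [apply Rmult_le_pos|]; lra|].
      apply (Rmult_le_reg_r ((1-x)^2 * (1-s)^2)); [nra|].
      replace (x / (1 - x) ^ 2 * ((1 - x) ^ 2 * (1 - s) ^ 2)) with (x * (1-s)^2) by (field; lra).
      replace (s / (1 - s) ^ 2 * ((1 - x) ^ 2 * (1 - s) ^ 2)) with (s * (1-x)^2) by (field; lra).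
      lra. }
    lra.
Qed.

Theorem mainTheorem9 (m : nat) (omega x y : R) :
  (1 <= m)%nat -> -1 <= omega <= 1 ->
  0 <= x -> 0 <= y -> x + y < 1 ->
  W m omega x + W m omega y <= W m omega (x + y).
Proof. intros Hm Hw Hx Hy Hs.
destruct (Wprop m omega Hm Hw) as [_ H].
destruct (Req_dec (x+y) 0) as [E|E].
- assert (x = 0) by lra. assert (y = 0) by lra. subst. rewrite Rplus_0_r, W0. lra.
- pose proof (H x (x+y) Hx ltac:(lra) Hs). pose proof (H y (x+y) Hy ltac:(lra) Hs).
  apply (Rmult_le_reg_r (x+y)); [lra|]. lra.
Qed.
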